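(* Given $t,\Delta\in\mathbb{N}$ with $t\ge\Delta$ and $\Delta$-sparse sets $A_1,A_2\subseteq[t]$, one can compute in time $O(T_{\mathrm{MinConv}}(t/\Delta))$ a set $A$ that $(\infty,\Delta)$-approximates $A_1+A_2$.
   Context: $\mathbb{N}=\{0,1,2,\dots\}$, $[t]=\{0,\dots,t\}$, $A+B=\{a+b:a\in A,b\in B\}$. $T_{\mathrm{MinConv}}(n)$ is the running time of an algorithm for \textsc{MinConv} on length-$n$ sequences (given $A,B$ of length $n$ with entries in $\{1,\dots,M\}$, compute $C[k]=\min_{i+j=k}(A[i]+B[j])$), with $T_{\mathrm{MinConv}}(n)=\Omega(n)$ and $T_{\mathrm{MinConv}}(O(n))=O(T_{\mathrm{MinConv}}(n))$. A set is $\Delta$-sparse if it contains at most $2$ elements in every interval $[x,x+\Delta]$, $x\in\mathbb{N}$. For $A\subseteq[t]$ (with $t\in\mathbb{N}\cup\{\infty\}$, where $[\infty]=\mathbb{N}$ and $\infty+1=\infty$) and $b\in\mathbb{N}$: $\mathrm{apx}^-_t(b,A)=\max\{a\in A\cup\{t+1\}:a\le b\}$, $\mathrm{apx}^+_t(b,A)=\min\{a\in A\cup\{t+1\}:a\ge b\}$ ($\max\emptyset=-\infty$, $\min\emptyset=\infty$). $A$ $(t,\Delta)$-approximates $B$ if $A\subseteq B\subseteq[t]$ and $\mathrm{apx}^+_t(b,A)-\mathrm{apx}^-_t(b,A)\le\Delta$ for all $b\in B$. *)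

(* Defs.v *)
From mathcomp Require Import all_boot.
Set Implicit Arguments. Unset Strict Implicit. Unset Printing Implicit Defensive.

(* Finite sets of naturals are represented by strictly increasing lists
   (for inputs) or arbitrary lists (for the output set, read as a set). *)

Definition sparse (D : nat) (A : seq nat) : Prop :=
  forall x : nat, count (fun a => (x <= a) && (a <= x + D)) A <= 2.

Definition sumset (A1 A2 : seq nat) : nat -> Prop :=
  fun b => exists2 a1, a1 \in A1 & exists2 a2, a2 \in A2 & b = a1 + a2.

(* t : option nat, with None standing for infinity; [t] = {0..t}, [oo] = N. *)
Definition in_range (t : option nat) (b : nat) : bool :=
  if t is Some t' then b <= t' else true.

(* the extra candidate t+1 (absent when t = oo, since oo+1 = oo is no nat) *)
Definition extra (t : option nat) : seq nat :=
  if t is Some t' then [:: t'.+1] else [::].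

(* apx^-_t(b, A) ; None encodes -oo (max of the empty set) *)
Definition apx_minus (t : option nat) (b : nat) (A : seq nat) : option nat :=
  match [seq a <- A ++ extra t | a <= b] with
  | [::] => None
  | c :: cs => Some (foldr maxn c cs)
  end.

(* apx^+_t(b, A) ; None encodes +oo (min of the empty set; when t = oo the
   candidate t+1 = oo is also +oo) *)
Definition apx_plus (t : option nat) (b : nat) (A : seq nat) : option nat :=
  match [seq a <- A ++ extra t | b <= a] with
  | [::] => None
  | c :: cs => Some (foldr minn c cs)
  end.

(* apx^+ - apx^- <= Delta, where any infinite value makes the difference
   infinite (+oo - x = +oo, x - (-oo) = +oo). *)
Definition gap_le (D : nat) (hi lo : option nat) : Prop :=
  match hi, lo with
  | Some h, Some l => h - l <= D
  | _, _ => False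
  end.

Definition approximates (t : option nat) (D : nat) (A : seq nat)
    (B : nat -> Prop) : Prop :=
  [/\ (forall a, a \in A -> B a),
      (forall b, B b -> in_range t b) &
      (forall b, B b -> gap_le D (apx_plus t b A) (apx_minus t b A))].

Inductive instr : Type :=
| IConst (r n : nat)
| IAdd (r a b : nat)
| ISub (r a b : nat)          (* R[r] := R[a] - R[b] (truncated) *)
| IMul (r a b : nat)
| IDiv (r a b : nat)          (* R[r] := R[a] / R[b] (floor; x/0 = 0) *)
| ILt (r a b : nat)
| ILoad (r a : nat)
| IStore (a b : nat)
| IJz (r l : nat)
| IJmp (l : nat)
| IMinConv (a b n c : nat)    (* oracle: with n := R[n], for k < 2n-1,
                                 M[R[c]+k] := min_{i+j=k, i,j<n}
                                   (M[R[a]+i] + M[R[b]+j]) *)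
| IHalt.

Record state := St { pc : nat; regs : nat -> nat; mem : nat -> nat }.

Definition upd (f : nat -> nat) (k v : nat) : nat -> nat :=
  fun x => if x == k then v else f x.

Definition minconv_at (M : nat -> nat) (a b n k : nat) : nat :=
  let f i := M (a + i) + M (b + (k - i)) in
  let lo := k - n.-1 in
  let hi := minn k n.-1 in
  foldr minn (f lo) (map f (iota lo (hi - lo).+1)).

Definition minconv_mem (M : nat -> nat) (a b n c : nat) : nat -> nat :=
  fun x => if (c <= x) && (x < c + (2 * n).-1)
           then minconv_at M a b n (x - c) else M x.

Definition step (T : nat -> nat) (P : seq instr) (s : state)
    : option (state * nat) :=
  let: St p R M := s in
  match nth IHalt P p with
  | IConst r n => Some (St p.+1 (upd R r n) M, 1)
  | IAdd r a b => Some (St p.+1 (upd R r (R a + R b)) M, 1)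
  | ISub r a b => Some (St p.+1 (upd R r (R a - R b)) M, 1)
  | IMul r a b => Some (St p.+1 (upd R r (R a * R b)) M, 1)
  | IDiv r a b => Some (St p.+1 (upd R r (R a %/ R b)) M, 1)
  | ILt r a b => Some (St p.+1 (upd R r (R a < R b)) M, 1)
  | ILoad r a => Some (St p.+1 (upd R r (M (R a))) M, 1)
  | IStore a b => Some (St p.+1 R (upd M (R a) (R b)), 1)
  | IJz r l => Some (St (if R r == 0 then l else p.+1) R M, 1)
  | IJmp l => Some (St l R M, 1)
  | IMinConv a b n c =>
      Some (St p.+1 R (minconv_mem M (R a) (R b) (R n) (R c)), T (R n))
  | IHalt => None
  end.

Definition bounded (W : nat) (s : state) : Prop :=
  (forall x, regs s x <= W) /\ (forall x, mem s x <= W).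

Inductive exec (W : nat) (T : nat -> nat) (P : seq instr)
    : state -> nat -> state -> Prop :=
| exec_halt s : bounded W s -> step T P s = None -> exec W T P s 0 s
| exec_step s s1 c k s2 : bounded W s -> step T P s = Some (s1, c) ->
    exec W T P s1 k s2 -> exec W T P s (c + k) s2.

(* input encoding: M[0] = t, M[1] = Delta, M[2] = |A1|, M[3] = |A2|,
   then the elements of A1 (increasing), then those of A2 (increasing). *)
Definition init_state (t D : nat) (A1 A2 : seq nat) : state :=
  St 0 (fun _ => 0)
     (fun x => nth 0 ([:: t; D; size A1; size A2] ++ A1 ++ A2) x).

Definition output (s : state) : seq nat :=
  mkseq (fun i => mem s i.+1) (mem s 0).

(* Main.v *)
Require Import Defs.
From mathcomp Require Import all_boot zify.
From Stdlib Require Import FunctionalExtensionality.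
Set Implicit Arguments. Unset Strict Implicit. Unset Printing Implicit Defensive.

Section Frame.
Variables (W : nat) (T : nat -> nat) (P : seq instr).

Inductive reach : state -> nat -> state -> Prop :=
| reach0 s : reach s 0 s
| reachS s s1 c k s2 : bounded W s -> step T P s = Some (s1, c) ->
    reach s1 k s2 -> reach s (c + k) s2.

Lemma reach_trans s c1 s1 c2 s2 : reach s c1 s1 -> reach s1 c2 s2 -> reach s (c1 + c2) s2.
Proof.
elim=> [//|s0 s1' c k s2' Hb Hs _ IH] H2.
rewrite -addnA; apply: reachS Hb Hs _; exact: IH.
Qed.

Lemma reach_exec s c s' : reach s c s' -> bounded W s' -> step T P s' = None -> exec W T P s c s'.
Proof.
elim=> [s0|s0 s1 c0 k s2 Hb Hs _ IH] Hb' Hn'; first exact: exec_halt.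
apply: exec_step Hb Hs _; exact: IH.
Qed.

Definition safe s (Q : nat -> state -> Prop) := exists c s', reach s c s' /\ Q c s'.

Lemma safe_ret s (Q : nat -> state -> Prop) : Q 0 s -> safe s Q.
Proof. by move=> H; exists 0, s; split=> //; constructor. Qed.

Lemma safe_step s s1 c (Q : nat -> state -> Prop) : bounded W s -> step T P s = Some (s1, c) ->
  safe s1 (fun k s' => Q (c + k) s') -> safe s Q.
Proof. move=> Hb Hs [k [s' [Hr HQ]]]; exists (c + k), s'; split=> //; exact: reachS Hr. Qed.

Lemma safe_bind s (Q1 Q : nat -> state -> Prop) : safe s Q1 ->
  (forall c s1, Q1 c s1 -> safe s1 (fun k s' => Q (c + k) s')) -> safe s Q.
Proof.
move=> [c [s1 [Hr HQ]]] /(_ _ _ HQ) [k [s' [Hr' HQ']]].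
exists (c + k), s'; split=> //; exact: reach_trans Hr Hr'.
Qed.

Lemma safe_mono s (Q1 Q : nat -> state -> Prop) : safe s Q1 ->
  (forall c s', Q1 c s' -> Q c s') -> safe s Q.
Proof. move=> [c [s' [Hr HQ]]] H; exists c, s'; split=> //; exact: H. Qed.

End Frame.

Fixpoint lk (x : nat) (L : seq nat) : nat :=
  match x with 0 => head 0 L | x'.+1 => lk x' (behead L) end.

Definition RF (L : seq nat) (y : nat) := lk y L.
Arguments RF L y /.

Lemma lk_nth x L : lk x L = nth 0 L x.
Proof. by elim: x L => [|x IH] [|e L] //=; rewrite IH; case: x {IH}. Qed.

Lemma upd_RF L r v : upd (RF L) r v = RF (set_nth 0 L r v).
Proof.
apply: functional_extensionality => y; rewrite /upd /= !lk_nth nth_set_nth /=.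
by case: eqP.
Qed.

Definition regs_ok W L := all (fun x => x <= W) L.

Lemma regs_ok_set W L r v : regs_ok W L -> v <= W -> regs_ok W (set_nth 0 L r v).
Proof.
rewrite /regs_ok => H Hv.
elim: L r H => [|e L IH] [|r] /=.
- by rewrite Hv.
- move=> _; elim: r => [|r IHr] /=; first by rewrite Hv.
  exact: IHr.
- by move=> /andP [_ ->]; rewrite Hv.
- by move=> /andP [-> H]; rewrite IH.
Qed.

Definition Prog : seq instr := [::
 (* 0 *) IConst 16 1; ILoad 1 0; ILoad 2 16; IConst 11 2; ILoad 3 11;
 (* 5 *) IConst 11 3; ILoad 4 11; IDiv 5 1 2; IAdd 6 5 5; IAdd 6 6 6;
 (* 10 *) IConst 11 2; IDiv 7 2 11; IAdd 7 7 16; IAdd 8 1 1; IAdd 23 1 1;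
 (* 15 *) IConst 11 2; IAdd 8 8 11; IConst 11 4; IAdd 14 11 3; IAdd 9 14 4;
 (* 20 *) IAdd 24 6 6; IAdd 10 9 0; IAdd 15 9 24; IAdd 15 15 24;
 (* 24 init loop *) ILt 20 10 15; IJz 20 29; IStore 10 8; IAdd 10 10 16; IJmp 24;
 (* 29 *) IConst 10 4; IAdd 15 9 0;
 (* 31 proc loop *) ILt 20 10 15; IJz 20 52; ILoad 11 10; IDiv 12 11 7;
 (* 35 *) ILt 13 10 14; ISub 13 16 13; IMul 13 13 6; IAdd 12 12 13; IAdd 12 12 9;
 (* 40 *) ILoad 21 12; ISub 20 21 11; ISub 20 21 20; IStore 12 20; IAdd 12 12 24;
 (* 45 *) ISub 13 1 11; ILoad 21 12; ISub 20 21 13; ISub 20 21 20; IStore 12 20;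
 (* 50 *) IAdd 10 10 16; IJmp 31;
 (* 52 *) IAdd 10 9 6; IAdd 11 9 24; IAdd 12 11 6; IAdd 13 11 24; IAdd 15 13 24;
 (* 57 *) IMinConv 9 10 6 13; IMinConv 11 12 6 15;
 (* 59 *) IAdd 10 13 0; ISub 15 15 16; IConst 22 0;
 (* 62 out loop *) ILt 20 10 15; IJz 20 77; ILoad 11 10; ILt 20 11 8;
 (* 66 *) IAdd 25 22 16; IStore 25 11; IAdd 13 10 24; ILoad 13 13; ISub 13 23 13;
 (* 71 *) IAdd 25 25 16; IStore 25 13; IAdd 20 20 20; IAdd 22 22 20; IAdd 10 10 16;
 (* 76 *) IJmp 62;
 (* 77 *) IStore 0 22; IHalt].

Definition mem_ok W (M : nat -> nat) := forall x, M x <= W.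

Lemma bounded_intro W p L M : regs_ok W L -> mem_ok W M -> bounded W (St p (RF L) M).
Proof.
move=> HL HM; split=> x //=; rewrite lk_nth.
case: (ltnP x (size L)) => Hx; first by apply: (allP HL); exact: mem_nth.
by rewrite nth_default.
Qed.

Lemma lk_le W L x : regs_ok W L -> lk x L <= W.
Proof. by move=> HL; have [/= H _] := bounded_intro 0 HL (fun x : nat => leq0n W); apply: H. Qed.

Lemma upd_mem_ok W M a v : mem_ok W M -> v <= W -> mem_ok W (upd M a v).
Proof. by move=> HM Hv x; rewrite /upd; case: eqP. Qed.

Ltac bnd_gen :=
  match goal with
  | HL : is_true (regs_ok ?W ?L) |- is_true (RF ?L _ <= ?W) => exact: lk_le HL
  | HM : mem_ok ?W ?M |- is_true (?M _ <= ?W) => exact: (HM _)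
  | HL : is_true (regs_ok ?W ?L) |- is_true (RF ?L _ - _ <= ?W) => exact: leq_trans (leq_subr _ _) (lk_le _ HL)
  | HL : is_true (regs_ok ?W ?L) |- is_true (RF ?L _ %/ _ <= ?W) => exact: leq_trans (leq_div _ _) (lk_le _ HL)
  | |- is_true (nat_of_bool _ <= ?W) => apply: leq_trans (leq_b1 _) _; lia
  | |- _ => cbn [RF lk head behead]; lia
  end.

Ltac post bt :=
  match goal with
  | |- safe ?W _ _ (St _ (upd (RF ?L) ?r ?v) _) _ =>
      let Hv := fresh "Hv" in
      assert (Hv : v <= W) by first [bnd_gen | bt];
      match goal with HL : is_true (regs_ok _ _) |- _ =>
        let HL' := fresh "HL" in
        pose proof (@regs_ok_set _ _ r _ HL Hv) as HL'; clear Hv HL; rename HL' into HL;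
        rewrite upd_RF; cbn [set_nth RF lk head behead] in HL |- * end
  | |- safe ?W _ _ (St _ _ (upd ?M ?a ?v)) _ =>
      let Hv := fresh "Hv" in
      assert (Hv : v <= W) by first [bnd_gen | bt];
      match goal with HM : mem_ok _ M |- _ =>
        let HM' := fresh "HM" in
        pose proof (@upd_mem_ok _ _ a _ HM Hv) as HM'; clear Hv HM; rename HM' into HM;
        cbn [RF lk head behead] in HM |- * end
  | _ => cbn [RF lk head behead];
         match goal with |- safe _ _ _ (St ?p _ _) _ =>
           let p' := eval simpl in p in change p with p' end
  end.

Ltac cond r b :=
  let c := match goal with |- safe _ _ _ (St _ (RF ?L) _) _ =>
      let e := eval cbn [nth] in (nth 0 L r) in
      match e with nat_of_bool ?c => constr:(c) end end in
  let E := fresh "E" in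
  assert (E : c = b) by lia;
  match goal with H : is_true (regs_ok _ _) |- _ =>
    rewrite E in H *; clear E; cbn [nat_of_bool] in H |- * end.

Ltac stp_with bt :=
  eapply safe_step;
  [ apply: bounded_intro; eassumption
  | cbv beta iota zeta delta [step Prog nth]; reflexivity
  | post bt ].
Tactic Notation "stp" := stp_with ltac:(idtac; fail).
Tactic Notation "stp" tactic(t) := stp_with t.

Lemma foldr_minn_le x s y : y \in x :: s -> foldr minn x s <= y.
Proof.
elim: s => [|e s IH] /=; rewrite !inE; first by move/eqP->.
case/orP=> [/eqP Hy|/orP [/eqP->|Hy]].
- by apply: leq_trans (geq_minr _ _) _; apply: IH; rewrite inE Hy eqxx.
- exact: geq_minl.
- by apply: leq_trans (geq_minr _ _) _; apply: IH; rewrite inE Hy orbT.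
Qed.

Lemma foldr_minn_in x s : foldr minn x s \in x :: s.
Proof.
elim: s => [|e s IH] /=; first by rewrite inE.
rewrite /minn; case: ifP => _; first by rewrite !inE eqxx orbT.
by move: IH; rewrite !inE => /orP [->|->]; rewrite ?orbT.
Qed.

Lemma foldr_maxn_ge x s y : y \in x :: s -> y <= foldr maxn x s.
Proof.
elim: s => [|e s IH] /=; rewrite !inE; first by move/eqP->.
case/orP=> [/eqP Hy|/orP [/eqP->|Hy]].
- by apply: leq_trans (leq_maxr e _); apply: IH; rewrite inE Hy eqxx.
- exact: leq_maxl.
- by apply: leq_trans (leq_maxr e _); apply: IH; rewrite inE Hy orbT.
Qed.

Lemma minconv_spec M a b n k : k < (2 * n).-1 ->
  (forall i j, i < n -> j < n -> i + j = k -> minconv_at M a b n k <= M (a + i) + M (b + j)) /\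
  exists i j, [/\ i < n, j < n, i + j = k & minconv_at M a b n k = M (a + i) + M (b + j)].
Proof.
move=> Hk; rewrite /minconv_at.
set f := fun i => M (a + i) + M (b + (k - i)).
split.
- move=> i j Hi Hj Hij.
  have -> : M (a + i) + M (b + j) = f i by rewrite /f -Hij addKn.
  apply: foldr_minn_le; rewrite inE; apply/orP; right.
  apply/mapP; exists i => //; rewrite mem_iota; lia.
- have := foldr_minn_in (f (k - n.-1)) (map f (iota (k - n.-1) ((minn k n.-1 - (k - n.-1)).+1))).
  rewrite inE => /orP [/eqP ->|/mapP [i Hi ->]].
  + exists (k - n.-1), (k - (k - n.-1)); split=> //; lia.
  + move: Hi; rewrite mem_iota => Hi.
    exists i, (k - i); split=> //; lia.
Qed.

Lemma minconv_mem_in M a b n c x : c <= x -> x < c + (2 * n).-1 ->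
  minconv_mem M a b n c x = minconv_at M a b n (x - c).
Proof. by move=> H1 H2; rewrite /minconv_mem H1 H2. Qed.

Lemma minconv_mem_out M a b n c x : x < c -> minconv_mem M a b n c x = M x.
Proof. by move=> H; rewrite /minconv_mem (_ : (c <= x) = false) //; lia. Qed.

Lemma minconv_mem_ok W M a b n c : (forall x, M x <= W) ->
  (forall i j, i < n -> j < n -> M (a + i) + M (b + j) <= W) ->
  forall x, minconv_mem M a b n c x <= W.
Proof.
move=> HM Hab x; rewrite /minconv_mem; case: ifP => // /andP [H1 H2].
have [_ [i [j [Hi Hj _ ->]]]] := @minconv_spec M a b n (x - c) ltac:(lia).
exact: Hab.
Qed.

Section Buckets.
Variables (h INF t : nat).

Definition Lv (S : seq nat) (i : nat) :=
  foldr (fun a m => if a %/ h == i then minn a m else m) INF S.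
Definition Hv (S : seq nat) (i : nat) :=
  foldr (fun a m => if a %/ h == i then minn (t - a) m else m) INF S.

Lemma Lv_nil i : Lv [::] i = INF. Proof. by []. Qed.
Lemma Hv_nil i : Hv [::] i = INF. Proof. by []. Qed.

Lemma Lv_rcons S a i : Lv (rcons S a) i = if a %/ h == i then minn (Lv S i) a else Lv S i.
Proof.
elim: S => [|e S IH] /=; first by case: ifP => //; rewrite minnC.
rewrite IH; case: ifP => He; case: ifP => Ha //.
by rewrite minnA.
Qed.

Lemma Hv_rcons S a i : Hv (rcons S a) i = if a %/ h == i then minn (Hv S i) (t - a) else Hv S i.
Proof.
elim: S => [|e S IH] /=; first by case: ifP => //; rewrite minnC.
rewrite IH; case: ifP => He; case: ifP => Ha //.
by rewrite minnA.
Qed.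

Lemma Lv_le S i : Lv S i <= INF.
Proof. elim: S => //= a S IH; case: ifP => // _; exact: leq_trans (geq_minr _ _) IH. Qed.

Lemma Hv_le S i : Hv S i <= INF.
Proof. elim: S => //= a S IH; case: ifP => // _; exact: leq_trans (geq_minr _ _) IH. Qed.

Lemma Lv_real S i : Lv S i < INF -> Lv S i \in S /\ Lv S i %/ h = i.
Proof.
elim: S => [|a S IH] /=; first by rewrite ltnn.
case: ifP => [/eqP Ha|_ /IH [H1 H2]]; last by rewrite inE H1 orbT.
rewrite /minn; case: ifP => _ H.
- by rewrite inE eqxx.
- by have [H1 H2] := IH H; rewrite inE H1 orbT.
Qed.

Lemma Lv_min S i a : a \in S -> a %/ h = i -> Lv S i <= a.
Proof.
elim: S => [|e S IH] //=; rewrite inE => /orP [/eqP <- ->|Ha Hi].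
- by rewrite eqxx geq_minl.
- case: ifP => _; last exact: IH.
  by apply: leq_trans (geq_minr _ _) _; exact: IH.
Qed.

Lemma Hv_real S i : Hv S i < INF -> exists2 a, a \in S & a %/ h = i /\ Hv S i = t - a.
Proof.
elim: S => [|a S IH] /=; first by rewrite ltnn.
case: ifP => [/eqP Ha|_ /IH [b H1 H2]]; last by exists b => //; rewrite inE H1 orbT.
rewrite /minn; case: ifP => _ H.
- by exists a; rewrite ?inE ?eqxx.
- by have [b H1 H2] := IH H; exists b => //; rewrite inE H1 orbT.
Qed.

Lemma Hv_min S i a : a \in S -> a %/ h = i -> Hv S i <= t - a.
Proof.
elim: S => [|e S IH] //=; rewrite inE => /orP [/eqP <- ->|Ha Hi].
- by rewrite eqxx geq_minl.
- case: ifP => _; last exact: IH.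
  by apply: leq_trans (geq_minr _ _) _; exact: IH.
Qed.

End Buckets.

Lemma apx_plus_le b A y : y \in A -> b <= y ->
  exists2 z, apx_plus None b A = Some z & z <= y.
Proof.
rewrite /apx_plus /= cats0 => Hy Hb.
have : y \in [seq a <- A | b <= a] by rewrite mem_filter Hb Hy.
case: [seq a <- A | b <= a] => [//|c cs] Hin.
by exists (foldr minn c cs) => //; exact: foldr_minn_le.
Qed.

Lemma apx_minus_ge b A y : y \in A -> y <= b ->
  exists2 z, apx_minus None b A = Some z & y <= z.
Proof.
rewrite /apx_minus /= cats0 => Hy Hb.
have : y \in [seq a <- A | a <= b] by rewrite mem_filter Hb Hy.
case: [seq a <- A | a <= b] => [//|c cs] Hin.
by exists (foldr maxn c cs) => //; exact: foldr_maxn_ge.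
Qed.

Section Approx.
Variables (t D nn h : nat) (A1 A2 : seq nat) (cl ch : nat -> nat).
Local Notation INF := (t + t + 2).
Local Notation K := ((2 * nn).-1).
Hypotheses (Hh0 : 0 < h) (Hh2 : h + h <= D + 2).
Hypotheses (HA1 : all (fun a => a <= t) A1) (HA2 : all (fun a => a <= t) A2)
  (Hbk : forall a, a <= t -> a %/ h < nn).
Hypothesis CLs : forall k, k < K ->
  (forall i j, i < nn -> j < nn -> i + j = k -> cl k <= Lv h INF A1 i + Lv h INF A2 j) /\
  exists i j, [/\ i < nn, j < nn, i + j = k & cl k = Lv h INF A1 i + Lv h INF A2 j].
Hypothesis CHs : forall k, k < K ->
  (forall i j, i < nn -> j < nn -> i + j = k -> ch k <= Hv h INF t A1 i + Hv h INF t A2 j) /\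
  exists i j, [/\ i < nn, j < nn, i + j = k & ch k = Hv h INF t A1 i + Hv h INF t A2 j].

Definition outg k := if cl k < INF then [:: cl k; t + t - ch k] else [::].
Definition outs m := flatten [seq outg k | k <- iota 0 m].

Lemma cl_real k : k < K -> cl k < INF ->
  exists a1 a2, [/\ a1 \in A1, a2 \in A2, a1 %/ h + a2 %/ h = k & cl k = a1 + a2].
Proof.
move=> Hk Hc.
have [_ [i [j [Hi Hj Hij Hcl]]]] := CLs Hk.
have HL1 : Lv h INF A1 i < INF by move: (Lv_le h INF A2 j); clear -Hcl Hc; lia.
have HL2 : Lv h INF A2 j < INF by move: (Lv_le h INF A1 i); clear -Hcl Hc; lia.
have [m1 e1] := Lv_real HL1; have [m2 e2] := Lv_real HL2.
by exists (Lv h INF A1 i), (Lv h INF A2 j); split=> //; rewrite e1 e2.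
Qed.

Lemma ch_real k : k < K -> cl k < INF ->
  exists a1 a2, [/\ a1 \in A1, a2 \in A2, a1 %/ h + a2 %/ h = k & t + t - ch k = a1 + a2].
Proof.
move=> Hk Hc.
have [_ [i [j [Hi Hj Hij Hcl]]]] := CLs Hk.
have HL1 : Lv h INF A1 i < INF by move: (Lv_le h INF A2 j); clear -Hcl Hc; lia.
have HL2 : Lv h INF A2 j < INF by move: (Lv_le h INF A1 i); clear -Hcl Hc; lia.
have [m1 e1] := Lv_real HL1; have [m2 e2] := Lv_real HL2.
have b1 := allP HA1 _ m1; have b2 := allP HA2 _ m2.
have [Hch [i1 [j1 [Hi1 Hj1 Hij1 Hch1]]]] := CHs Hk.
have hle := Hch i j Hi Hj Hij.
have h1 := @Hv_min h INF t _ _ _ m1 e1; have h2 := @Hv_min h INF t _ _ _ m2 e2.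
have HH1 : Hv h INF t A1 i1 < INF.
  by move: (Hv_le h INF t A2 j1); clear -Hch1 hle h1 h2 b1 b2; lia.
have HH2 : Hv h INF t A2 j1 < INF.
  by move: (Hv_le h INF t A1 i1); clear -Hch1 hle h1 h2 b1 b2; lia.
have [a1 m1' [e1' f1]] := Hv_real HH1; have [a2 m2' [e2' f2]] := Hv_real HH2.
have c1 := allP HA1 _ m1'; have c2 := allP HA2 _ m2'.
exists a1, a2; split=> //; first by rewrite e1' e2'.
by clear -f1 f2 c1 c2 Hch1; lia.
Qed.

Lemma outs_sub y : y \in outs K -> exists2 a1, a1 \in A1 & exists2 a2, a2 \in A2 & y = a1 + a2.
Proof.
move/flattenP=> [s /mapP [k Hk ->]]; rewrite mem_iota /= in Hk.
have Hk' : k < K by clear -Hk; lia.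
rewrite /outg; case: ifP => Hc //; rewrite !inE => /orP [/eqP ->|/eqP ->].
- have [a1 [a2 [m1 m2 _ ->]]] := cl_real Hk' Hc.
  by exists a1 => //; exists a2.
- have [a1 [a2 [m1 m2 _ ->]]] := ch_real Hk' Hc.
  by exists a1 => //; exists a2.
Qed.
Lemma approx_outs : approximates None D (outs K) (sumset A1 A2).
Proof.
split.
- exact: outs_sub.
- by [].
move=> b [a1 m1 [a2 m2 ->]].
have b1 := allP HA1 _ m1; have b2 := allP HA2 _ m2.
have Hi := Hbk b1; have Hj := Hbk b2.
have l1 := @Lv_min h INF A1 _ a1 m1 erefl; have l2 := @Lv_min h INF A2 _ a2 m2 erefl.
have k1 := @Hv_min h INF t A1 _ a1 m1 erefl; have k2 := @Hv_min h INF t A2 _ a2 m2 erefl.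
move: Hi Hj l1 l2 k1 k2; move: (a1 %/ h) (a2 %/ h) => i j Hi Hj l1 l2 k1 k2.
have Hk : i + j < K by clear -Hi Hj; lia.
have [Hcl _] := CLs Hk.
have le1 := Hcl i j Hi Hj erefl.
have Hc : cl (i + j) < INF by clear -le1 l1 l2 b1 b2; lia.
have [c1 [c2 [n1 n2 Hs Hmx]]] := ch_real Hk Hc.
have [e1 [e2 [_ _ Hs' Hmn]]] := cl_real Hk Hc.
have [Hch _] := CHs Hk.
have hle := Hch i j Hi Hj erefl.
have d1 := allP HA1 _ n1; have d2 := allP HA2 _ n2.
have u1 := @ltn_ceil c1 h Hh0; have u2 := @ltn_ceil c2 h Hh0.
have g1 := leq_trunc_div e1 h; have g2 := leq_trunc_div e2 h.
have Hmem : [:: cl (i + j); t + t - ch (i + j)] = outg (i + j) by rewrite /outg Hc.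
have In1 : cl (i + j) \in outs K.
  apply/flattenP; exists (outg (i + j)); last by rewrite -Hmem inE eqxx.
  by apply/mapP; exists (i + j) => //; rewrite mem_iota; clear -Hk; lia.
have In2 : t + t - ch (i + j) \in outs K.
  apply/flattenP; exists (outg (i + j)); last by rewrite -Hmem !inE eqxx orbT.
  by apply/mapP; exists (i + j) => //; rewrite mem_iota; clear -Hk; lia.
have [z Hz zle] := apx_plus_le (b := a1 + a2) In2 ltac:(clear -hle k1 k2 b1 b2 Hmx; lia).
have [z' Hz' zge] := apx_minus_ge (b := a1 + a2) In1 ltac:(clear -le1 l1 l2; lia).
rewrite Hz Hz' /=.
move: u1 u2 g1 g2 Hs Hs'.
move: (c1 %/ h) (c2 %/ h) (e1 %/ h) (e2 %/ h) => f1 f2 f3 f4 u1 u2 g1 g2 Hs Hs'.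
have E1 : f3 * h + f4 * h = (i + j) * h by rewrite -mulnDl Hs'.
have E2 : f1.+1 * h + f2.+1 * h = (i + j) * h + h + h by rewrite -mulnDl -Hs; lia.
clear -E1 E2 u1 u2 g1 g2 Hmx Hmn zle zge Hh2.
lia.
Qed.
End Approx.

Definition eqw (x y : nat) := x = y.

Section Exec.
Variables (W : nat) (T : nat -> nat) (t D q hh : nat) (A1 A2 : seq nat) (M0 : nat -> nat).
Local Notation n1 := (size A1).
Local Notation n2 := (size A2).
Local Notation nn := (q + q + (q + q)).
Local Notation B := (4 + n1 + n2).
Local Notation INF := (t + t + 2).
Hypotheses (HD0 : 0 < D) (HDt : D <= t) (Hq : eqw (t %/ D) q) (Hq1 : 0 < q) (Hqt : q <= t)
  (Hh : eqw (D %/ 2 + 1) hh) (Hh0 : 0 < hh) (HW : 64 * t.+1 <= W) (Hsz : n1 + n2 <= 4 * q.+1).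
Hypotheses (HA1 : all (fun a => a <= t) A1) (HA2 : all (fun a => a <= t) A2)
  (Hbk : forall a, a <= t -> a %/ hh < nn).
Hypotheses (HM00 : M0 0 = t) (HM01 : M0 1 = D) (HM02 : M0 2 = n1) (HM03 : M0 3 = n2)
  (HM0j : forall j, j < n1 + n2 -> M0 (4 + j) = nth 0 (A1 ++ A2) j) (HM0ok : mem_ok W M0).

Definition RL x10 x11 x12 x13 x15 x20 x21 x22 x25 : seq nat :=
  [:: 0; t; D; n1; n2; q; nn; hh; INF; B; x10; x11; x12; x13; 4 + n1; x15; 1; 0; 0; 0;
      x20; x21; x22; t + t; nn + nn; x25].

Definition InvI j s := exists x10 x11 x12 x13 x15 x20 x21 x22 x25 M,
  [/\ s = St 24 (RF (RL x10 x11 x12 x13 x15 x20 x21 x22 x25)) M,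
      regs_ok W (RL x10 x11 x12 x13 x15 x20 x21 x22 x25), mem_ok W M,
      x10 = B + j /\ x15 = B + (nn + nn) + (nn + nn) &
      forall x, M x = if (B <= x) && (x < B + j) then INF else M0 x].

Lemma ph_setup : safe W T Prog
  (St 0 (RF [:: 0;0;0;0;0;0;0;0;0;0;0;0;0;0;0;0;0;0;0;0;0;0;0;0;0;0]) M0)
  (fun c s => c = 24 /\ InvI 0 s).
Proof.
have HL : regs_ok W [:: 0;0;0;0;0;0;0;0;0;0;0;0;0;0;0;0;0;0;0;0;0;0;0;0;0;0] by [].
have HM := HM0ok.
stp. stp. stp. stp. stp. stp. stp. 
rewrite HM00 HM01 HM02 HM03 in HL *.
stp. rewrite Hq in HL *.
stp. stp. stp. stp. stp.
rewrite Hh in HL *.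
stp. stp. stp. stp. stp. stp. stp. stp. stp. stp. stp.
apply: safe_ret; split; first by [].
do 10 eexists; split; [reflexivity | exact: HL | exact: HM | split; lia | ].
move=> x; case: ifP => //; lia.
Qed.

Definition InvP j s := exists x10 x11 x12 x13 x15 x20 x21 x22 x25 M,
  [/\ s = St 31 (RF (RL x10 x11 x12 x13 x15 x20 x21 x22 x25)) M,
      regs_ok W (RL x10 x11 x12 x13 x15 x20 x21 x22 x25), mem_ok W M,
      x10 = 4 + j /\ x15 = B &
      (forall x, x < B -> M x = M0 x) /\
      (forall i, i < nn -> [/\ M (B + i) = Lv hh INF (take j A1) i,
                              M (B + nn + i) = Lv hh INF (take (j - n1) A2) i,
                              M (B + (nn + nn) + i) = Hv hh INF t (take j A1) i &
                              M (B + (nn + nn) + nn + i) = Hv hh INF t (take (j - n1) A2) i])].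

Lemma ph_init m : forall j s, j + m = nn + nn + (nn + nn) -> InvI j s ->
  safe W T Prog s (fun c s' => c <= 5 * m + 4 /\ InvP 0 s').
Proof.
elim: m => [|m IH] j s Hjm [x10 [x11 [x12 [x13 [x15 [x20 [x21 [x22 [x25 [M
   [-> HL HM [E10 E15] HMv]]]]]]]]]]]; subst x10 x15; rewrite /RL in HL *.
- have HMin : forall x, B <= x -> x < B + j -> M x = INF.
    by move=> x h1 h2; rewrite HMv h1 h2.
  have HMlo : forall x, x < B -> M x = M0 x.
    by move=> x h1; rewrite HMv (_ : B <= x = false) //; lia.
  stp. cond 20 false. stp. stp. stp.
  apply: safe_ret; split; first by lia.
  do 10 eexists; split; [reflexivity | exact: HL | exact: HM | split; lia | split].
  + exact: HMlo.
  + move=> i Hi; rewrite take0 sub0n take0 !Lv_nil !Hv_nil.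
    by split; apply: HMin; lia.
- have Hj : j < nn + nn + (nn + nn) by lia.
  stp. cond 20 true. stp. stp. stp. stp.
  apply: safe_mono; first apply: (IH j.+1); first by lia.
  + do 10 eexists; split; [reflexivity | exact: HL | exact: HM | split; lia | ].
    move=> x; rewrite /upd HMv; case: eqP => [->|Hne].
    * by rewrite (_ : (B <= B + j < B + j.+1) = true) //; apply/andP; split; lia.
    * have -> : (B <= x < B + j.+1) = (B <= x < B + j) => //.
      by apply/idP/idP => /andP [h1 h2]; apply/andP; split; lia.
  + by move=> c s' [Hc Hp]; split=> //; lia.
Qed.

Lemma mem_step j M a i off cur cur2 :
  j < n1 + n2 ->
  (forall x, x < B -> M x = M0 x) ->
  (forall i, i < nn -> [/\ M (B + i) = Lv hh INF (take j A1) i,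
                              M (B + nn + i) = Lv hh INF (take (j - n1) A2) i,
                              M (B + (nn + nn) + i) = Hv hh INF t (take j A1) i &
                              M (B + (nn + nn) + nn + i) = Hv hh INF t (take (j - n1) A2) i]) ->
  a = nth 0 (A1 ++ A2) j -> eqw (a %/ hh) i -> i < nn ->
  (off = 0 /\ j < n1) \/ (off = nn /\ n1 <= j) ->
  cur = M (i + off + B) ->
  cur2 = upd M (i + off + B) (cur - (cur - a)) (i + off + B + (nn + nn)) ->
  let M2 := upd (upd M (i + off + B) (cur - (cur - a))) (i + off + B + (nn + nn))
                (cur2 - (cur2 - (t - a))) in
  (forall x, x < B -> M2 x = M0 x) /\
  (forall i', i' < nn -> [/\ M2 (B + i') = Lv hh INF (take j.+1 A1) i',
                              M2 (B + nn + i') = Lv hh INF (take (j.+1 - n1) A2) i',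
                              M2 (B + (nn + nn) + i') = Hv hh INF t (take j.+1 A1) i' &
                              M2 (B + (nn + nn) + nn + i') = Hv hh INF t (take (j.+1 - n1) A2) i']).
Proof.
move=> Hj Hlo Hinv Ea Ei Hi Hoff Ecur Ecur2 M2.
split.
  move=> x Hx; rewrite /M2 /upd; case: eqP => H2; first lia.
  case: eqP => H1; first lia. exact: Hlo.
have [c1 c2 c3 c4] := Hinv i Hi.
rewrite /eqw in Ei.
case: Hoff => [[Eo Hj1]|[Eo Hj1]]; subst off.
- have Ea1 : a = nth 0 A1 j by rewrite Ea nth_cat Hj1.
  have Et : take j.+1 A1 = rcons (take j A1) a by rewrite Ea1 (take_nth 0).
  have Et2 : j.+1 - n1 = j - n1 by lia.
  rewrite Et Et2.
  have Ec : cur = Lv hh INF (take j A1) i by rewrite Ecur -c1 addn0 addnC.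
  have Ec2 : cur2 = Hv hh INF t (take j A1) i.
    by rewrite Ecur2 /upd; case: eqP => H; [lia | rewrite -c3; congr M; lia].
  move=> i' Hi'; have [d1 d2 d3 d4] := Hinv i' Hi'.
  rewrite /M2 /upd Lv_rcons Hv_rcons Ei.
  split.
  + case: eqP => H2; first lia.
    case: eqP => H1.
    * have -> : i' = i by lia.
      by rewrite eqxx Ec minnE.
    * by rewrite (_ : (i == i') = false) ?d1 //; apply/eqP; lia.
  + case: eqP => H2; first lia.
    case: eqP => H1; first lia.
    exact: d2.
  + case: eqP => H2.
    * have -> : i' = i by lia.
      by rewrite eqxx Ec2 minnE.
    * case: eqP => H1; first lia.
      by rewrite (_ : (i == i') = false) ?d3 //; apply/eqP; lia.
  + case: eqP => H2; first lia.
    case: eqP => H1; first lia.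
    exact: d4.
- have Ej : j - n1 < n2 by lia.
  have Ea1 : a = nth 0 A2 (j - n1) by rewrite Ea nth_cat (_ : (j < n1) = false) //; lia.
  have Et : take j.+1 A1 = take j A1 by rewrite !take_oversize //; lia.
  have Et2 : take (j.+1 - n1) A2 = rcons (take (j - n1) A2) a.
    by rewrite subSn // Ea1 (take_nth 0).
  rewrite Et Et2.
  have Ec : cur = Lv hh INF (take (j - n1) A2) i by rewrite Ecur -c2; congr M; lia.
  have Ec2 : cur2 = Hv hh INF t (take (j - n1) A2) i.
    by rewrite Ecur2 /upd; case: eqP => H; [lia | rewrite -c4; congr M; lia].
  move=> i' Hi'; have [d1 d2 d3 d4] := Hinv i' Hi'.
  rewrite /M2 /upd Lv_rcons Hv_rcons Ei.
  split.
  + case: eqP => H2; first lia.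
    case: eqP => H1; first lia.
    exact: d1.
  + case: eqP => H2; first lia.
    case: eqP => H1.
    * have -> : i' = i by lia.
      by rewrite eqxx Ec minnE.
    * by rewrite (_ : (i == i') = false) ?d2 //; apply/eqP; lia.
  + case: eqP => H2; first lia.
    case: eqP => H1; first lia.
    exact: d3.
  + case: eqP => H2.
    * have -> : i' = i by lia.
      by rewrite eqxx Ec2 minnE.
    * case: eqP => H1; first lia.
      by rewrite (_ : (i == i') = false) ?d4 //; apply/eqP; lia.
Qed.

Local Notation E4 := (B + (nn + nn) + (nn + nn)).
Local Notation E6 := (B + (nn + nn) + (nn + nn) + (nn + nn)).
Definition clF (M2 : nat -> nat) k := M2 (E4 + k).
Definition chF (M2 : nat -> nat) k := M2 (E6 + k).

Definition CLsp (M2 : nat -> nat) := forall k, k < (2 * nn).-1 ->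
  (forall i j, i < nn -> j < nn -> i + j = k -> clF M2 k <= Lv hh INF A1 i + Lv hh INF A2 j) /\
  exists i j, [/\ i < nn, j < nn, i + j = k & clF M2 k = Lv hh INF A1 i + Lv hh INF A2 j].
Definition CHsp (M2 : nat -> nat) := forall k, k < (2 * nn).-1 ->
  (forall i j, i < nn -> j < nn -> i + j = k -> chF M2 k <= Hv hh INF t A1 i + Hv hh INF t A2 j) /\
  exists i j, [/\ i < nn, j < nn, i + j = k & chF M2 k = Hv hh INF t A1 i + Hv hh INF t A2 j].

Definition InvO (M2 : nat -> nat) k s := exists x10 x11 x12 x13 x15 x20 x21 x22 x25 M,
  [/\ s = St 62 (RF (RL x10 x11 x12 x13 x15 x20 x21 x22 x25)) M,
      regs_ok W (RL x10 x11 x12 x13 x15 x20 x21 x22 x25), mem_ok W M,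
      [/\ x10 = E4 + k, x15 = E6 - 1 & x22 = size (outs t (clF M2) (chF M2) k)] &
      (forall x, E4 <= x -> M x = M2 x) /\
      (forall m, m < size (outs t (clF M2) (chF M2) k) ->
                 M m.+1 = nth 0 (outs t (clF M2) (chF M2) k) m)].

Lemma ph_orc s : InvP (n1 + n2) s ->
  safe W T Prog s (fun c s' => c <= 12 + (T nn + T nn) /\
     exists M2, [/\ CLsp M2, CHsp M2 & InvO M2 0 s']).
Proof.
move=> [x10 [x11 [x12 [x13 [x15 [x20 [x21 [x22 [x25 [M
   [-> HL HM [E10 E15] [Hlo Hinv]]]]]]]]]]]]; subst x10 x15; rewrite /RL in HL *.
rewrite (_ : n1 + n2 - n1 = n2) in Hinv; last lia.
rewrite !take_oversize ?leq_addr // in Hinv.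
stp. cond 20 false. stp. stp. stp. stp. stp. stp.
have HM1 : mem_ok W (minconv_mem M B (B + nn) nn E4).
  apply: minconv_mem_ok => // i j Hi Hj.
  have [c1 _ _ _] := Hinv i Hi; have [_ d2 _ _] := Hinv j Hj.
  rewrite c1 d2; have := Lv_le hh INF A1 i; have := Lv_le hh INF A2 j; lia.
stp.
have HM2 : mem_ok W (minconv_mem (minconv_mem M B (B + nn) nn E4)
                      (B + (nn + nn)) (B + (nn + nn) + nn) nn E6).
  apply: minconv_mem_ok => // i j Hi Hj.
  have [_ _ c3 _] := Hinv i Hi; have [_ _ _ d4] := Hinv j Hj.
  rewrite !minconv_mem_out; try lia.
  rewrite c3 d4; have := Hv_le hh INF t A1 i; have := Hv_le hh INF t A2 j; lia.
stp. stp. stp. stp.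
apply: safe_ret; split; first by lia.
exists (minconv_mem (minconv_mem M B (B + nn) nn E4) (B + (nn + nn)) (B + (nn + nn) + nn) nn E6).
split.
- move=> k Hk; rewrite /clF minconv_mem_out; last lia.
  rewrite minconv_mem_in; try lia.
  rewrite (_ : E4 + k - E4 = k); last lia.
  have [S1 [i [j [Hi Hj Hij Hv]]]] := minconv_spec M B (B + nn) Hk.
  split.
  + move=> i' j' Hi' Hj' Hij'; have := S1 i' j' Hi' Hj' Hij'.
    by have [-> _ _ _] := Hinv i' Hi'; have [_ -> _ _] := Hinv j' Hj'.
  + exists i, j; split=> //; rewrite Hv.
    by have [-> _ _ _] := Hinv i Hi; have [_ -> _ _] := Hinv j Hj.
- move=> k Hk; rewrite /chF minconv_mem_in; try lia.
  rewrite (_ : E6 + k - E6 = k); last lia.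
  have [S1 [i [j [Hi Hj Hij Hv]]]] := minconv_spec (minconv_mem M B (B + nn) nn E4)
     (B + (nn + nn)) (B + (nn + nn) + nn) Hk.
  split.
  + move=> i' j' Hi' Hj' Hij'; have := S1 i' j' Hi' Hj' Hij'.
    rewrite !minconv_mem_out; try lia.
    by have [_ _ -> _] := Hinv i' Hi'; have [_ _ _ ->] := Hinv j' Hj'.
  + exists i, j; split=> //; rewrite Hv.
    rewrite !minconv_mem_out; try lia.
    by have [_ _ -> _] := Hinv i Hi; have [_ _ _ ->] := Hinv j Hj.
- do 10 eexists; split; [reflexivity | exact: HL | exact: HM2 | split; [lia | lia | by []] | ].
  by split.
Qed.

Lemma ph_proc m : forall j s, j + m = n1 + n2 -> InvP j s ->
  safe W T Prog s (fun c s' => c <= 21 * m + 12 + (T nn + T nn) /\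
     exists M2, [/\ CLsp M2, CHsp M2 & InvO M2 0 s']).
Proof.
elim: m => [|m IH] j s Hjm Hinv.
  rewrite (_ : j = n1 + n2) in Hinv; last lia.
  by apply: safe_mono (ph_orc Hinv) _ => c s' [Hc H]; split=> //; lia.
move: Hinv => [x10 [x11 [x12 [x13 [x15 [x20 [x21 [x22 [x25 [M
   [-> HL HM [E10 E15] [Hlo Hinv]]]]]]]]]]]]; subst x10 x15; rewrite /RL in HL *.
have Hj : j < n1 + n2 by lia.
stp. cond 20 true. stp. stp.
rewrite (Hlo (4 + j)) ?(HM0j Hj) in HL *; last lia.
set a := nth 0 (A1 ++ A2) j in HL *.
have Ea : a = nth 0 (A1 ++ A2) j by [].
have Hat : a <= t.
  have : a \in A1 ++ A2 by rewrite Ea mem_nth // size_cat.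
  by rewrite mem_cat => /orP [/(allP HA1)|/(allP HA2)].
clearbody a.
stp.
set i := a %/ hh in HL *.
have Ei : eqw (a %/ hh) i by [].
have Hi : i < nn by exact: Hbk.
clearbody i.
stp. stp. stp ltac:(cbn [RF lk head behead]; apply: leq_trans (leq_mul (leq_subr _ 1) (leqnn _)) _; lia).
set off := (1 - (4 + j < 4 + n1)) * nn in HL *.
have Hoff : (off = 0 /\ j < n1) \/ (off = nn /\ n1 <= j).
  rewrite /off ltn_add2l; case: (ltnP j n1) => H; [left|right]; split=> //; lia.
have Hoffn : off <= nn by lia.
clearbody off.
stp. stp. stp.
set cur := M (i + off + B) in HL *.
have Ecur : cur = M (i + off + B) by [].
clearbody cur.
stp. stp. stp. stp. stp. stp.
set cur2 := upd M (i + off + B) (cur - (cur - a)) (i + off + B + (nn + nn)) in HL *.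
have Ecur2 : cur2 = upd M (i + off + B) (cur - (cur - a)) (i + off + B + (nn + nn)) by [].
clearbody cur2.
stp. stp. stp. stp. stp.
apply: safe_mono; first apply: (IH j.+1); first by lia.
- do 10 eexists; split; [reflexivity | exact: HL | exact: HM | split; lia | ].
  exact: (mem_step Hj Hlo Hinv Ea Ei Hi Hoff Ecur Ecur2).
- by move=> c s' [Hc Hp]; split=> //; lia.
Qed.

Lemma updE_ne (f : nat -> nat) k v x : x != k -> upd f k v x = f x.
Proof. by rewrite /upd => /negbTE ->. Qed.

Lemma outsS cl ch k : outs t cl ch k.+1 = outs t cl ch k ++ outg t cl ch k.
Proof. by rewrite /outs -addn1 iotaD map_cat flatten_cat /= cats0. Qed.

Lemma size_outs cl ch k : size (outs t cl ch k) <= k + k.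
Proof.
elim: k => [//|k IH]; rewrite outsS size_cat /outg.
by case: ifP => _ /=; lia.
Qed.

Definition Fin (M2 : nat -> nat) s :=
  [/\ bounded W s, step T Prog s = None & output s = outs t (clF M2) (chF M2) (2 * nn).-1].

Lemma ph_out M2 m : forall k s, k + m = (2 * nn).-1 -> InvO M2 k s ->
  safe W T Prog s (fun c s' => c <= 15 * m + 3 /\ Fin M2 s').
Proof.
elim: m => [|m IH] k s Hkm [x10 [x11 [x12 [x13 [x15 [x20 [x21 [x22 [x25 [M
   [-> HL HM [E10 E15 E22] [Hhi Hout]]]]]]]]]]]]; subst x10 x15 x22; rewrite /RL in HL *.
- have Ek : k = (2 * nn).-1 by lia.
  subst k.
  stp. cond 20 false. stp. stp.
  apply: safe_ret; split; first by lia.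
  split.
  + by apply: bounded_intro.
  + by cbv beta iota zeta delta [step Prog nth].
  + rewrite /output /=.
    apply: (@eq_from_nth _ 0); first by rewrite size_mkseq.
    move=> i; rewrite size_mkseq => Hi; rewrite nth_mkseq //= updE_ne //.
    exact: Hout.
- have Hk : k < (2 * nn).-1 by lia.
  have Hcnt := size_outs (clF M2) (chF M2) k.
  stp. cond 20 true. stp. stp.
  rewrite Hhi in HL *; last lia.
  stp.
  set sb := (M2 (E4 + k) < INF) in HL *.
  stp. stp. stp. stp.
  rewrite updE_ne in HL *; last lia.
  rewrite Hhi in HL *; last lia.
  stp. stp. stp.
  stp ltac:(cbn [RF lk head behead]; apply: leq_trans (leq_add (leq_b1 _) (leq_b1 _)) _; lia).
  stp ltac:(cbn [RF lk head behead]; have := leq_b1 sb; lia).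
  stp. stp.
  set cnt := size (outs t (clF M2) (chF M2) k) in HL HM Hout Hcnt *.
  apply: safe_mono; first apply: (IH k.+1); first by lia.
  + do 10 eexists; split; [reflexivity | exact: HL | exact: HM | split | split].
    * lia.
    * by [].
    * rewrite outsS size_cat /outg (_ : clF M2 k = M2 (E4 + k)) // /sb /cnt.
      by case: (M2 (E4 + k) < INF) => /=; lia.
    * move=> x Hx; rewrite updE_ne; last lia.
      rewrite updE_ne; last lia. exact: Hhi.
    * move=> mm; rewrite outsS size_cat nth_cat -/cnt => Hmm.
      case: (ltnP mm cnt) => H1.
      - rewrite updE_ne; last lia. rewrite updE_ne; last lia. exact: Hout.
      - move: Hmm; rewrite /outg (_ : clF M2 k = M2 (E4 + k)) // (_ : chF M2 k = M2 (E6 + k)) //.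
        case: ifP => Hc /= Hmm; last lia.
        rewrite (_ : E6 + k = E4 + k + (nn + nn)); last lia.
        have [->|->] : mm = cnt \/ mm = cnt + 1 by lia.
        ++ rewrite /upd; case: eqP => E1; first lia.
           case: eqP => E2; last lia. by rewrite subnn.
        ++ rewrite /upd; case: eqP => E1; last lia.
           by rewrite (_ : cnt + 1 - cnt = 1) //; lia.
  + by move=> c s' [Hc Hf]; split=> //; lia.
Qed.

Lemma run_all : safe W T Prog
  (St 0 (RF [:: 0;0;0;0;0;0;0;0;0;0;0;0;0;0;0;0;0;0;0;0;0;0;0;0;0;0]) M0)
  (fun c s => c <= 24 + (5 * (nn + nn + (nn + nn)) + 4) + (21 * (n1 + n2) + 12 + (T nn + T nn))
                  + (15 * (2 * nn).-1 + 3) /\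
     exists M2, [/\ CLsp M2, CHsp M2 & Fin M2 s]).
Proof.
apply: safe_bind; first exact: ph_setup.
move=> c1 s1 [-> H1].
apply: safe_bind; first by apply: (ph_init (m := nn + nn + (nn + nn)) (j := 0)).
move=> c2 s2 [Hc2 H2].
apply: safe_bind; first by apply: (ph_proc (m := n1 + n2) (j := 0)).
move=> c3 s3 [Hc3 [M2 [HC HH H3]]].
apply: safe_mono; first by apply: (ph_out (m := (2 * nn).-1) (k := 0)); last exact: H3.
move=> c4 s4 [Hc4 HF]; split; first by lia.
by exists M2.
Qed.

End Exec.

Lemma sparse_count D A m : sparse D A -> count (fun a => a < m * D.+1) A <= 2 * m.
Proof.
move=> Hs; elim: m => [|m IH].
  by rewrite (eq_count (a2 := pred0)) ?count_pred0 // => a; rewrite mul0n.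
apply: leq_trans (_ : count (predU (fun a => a < m * D.+1)
                     (fun a => (m * D.+1 <= a) && (a <= m * D.+1 + D))) A <= _).
  apply: sub_count => a /= Ha; apply/orP.
  case: (ltnP a (m * D.+1)) => H; [by left | right].
  by apply/andP; split=> //; move: Ha; rewrite mulSn; lia.
rewrite -(leq_add2r (count (predI (fun a => a < m * D.+1)
                     (fun a => (m * D.+1 <= a) && (a <= m * D.+1 + D))) A)).
rewrite count_predUI.
have := Hs (m * D.+1); lia.
Qed.

Lemma sparse_size D A t : sparse D A -> all (fun a => a <= t) A -> 0 < D ->
  size A <= 2 * (t %/ D).+1.
Proof.
move=> Hs Ha HD.
have Ht := ltn_ceil t HD.
move: Ht; move: (t %/ D) => q Ht.
have <- : count (fun a => a < q.+1 * D.+1) A = size A.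
  apply/eqP; rewrite -all_count; apply/allP => a /(allP Ha) H.
  rewrite mulnS; lia.
exact: sparse_count.
Qed.

Lemma zeros_RF : RF [:: 0;0;0;0;0;0;0;0;0;0;0;0;0;0;0;0;0;0;0;0;0;0;0;0;0;0] = (fun _ => 0).
Proof.
apply: functional_extensionality => x /=; rewrite lk_nth.
rewrite (_ : [:: 0;0;0;0;0;0;0;0;0;0;0;0;0;0;0;0;0;0;0;0;0;0;0;0;0;0] = nseq 26 0) //.
by rewrite nth_nseq; case: ifP.
Qed.

Theorem lemma4p10 (T : nat -> nat)
    (T_lin : exists c, forall n, n <= c * T n + c)
    (T_scale : forall c, exists d, forall n, T (c * n) <= d * T n + d) :
  exists (P : seq instr) (C : nat),
    forall (t D : nat) (A1 A2 : seq nat),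
      0 < D -> D <= t ->
      sorted ltn A1 -> sorted ltn A2 ->
      all (fun a => a <= t) A1 -> all (fun a => a <= t) A2 ->
      sparse D A1 -> sparse D A2 ->
      exists (cost : nat) (s : state),
        [/\ exec (C * (t.+1) ^ C) T P (init_state t D A1 A2) cost s,
            cost <= C * T (t %/ D) + C &
            approximates None D (output s) (sumset A1 A2)].
Proof.
case: T_lin => c0 Hc0; case: (T_scale 4) => d Hd.
exists Prog, (284 * c0 + 2 * d + 200).
move=> t D A1 A2 HD HDt _ _ Ha1 Ha2 Hsp1 Hsp2.
set C := 284 * c0 + 2 * d + 200.
have Hsz1 := sparse_size Hsp1 Ha1 HD; have Hsz2 := sparse_size Hsp2 Ha2 HD.
have Hq1 : 0 < t %/ D by rewrite divn_gt0.
have Hqt : t %/ D <= t := leq_div t D.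
have Ht := ltn_ceil t HD.
have HD2 := ltn_ceil D (isT : 0 < 2).
have Hcq := Hc0 (t %/ D).
have Hdq := Hd (t %/ D).
have [q Hq] : exists q, t %/ D = q by eexists.
have [hh Hh] : exists hh, D %/ 2 + 1 = hh by eexists.
rewrite Hq in Hsz1 Hsz2 Hq1 Hqt Ht Hcq Hdq *.
rewrite (_ : (D %/ 2).+1 = hh) in HD2; last by rewrite -Hh addn1.
have Hh0 : 0 < hh by rewrite -Hh addn1.
have Hh2 : hh + hh <= D + 2.
  rewrite -Hh; have := leq_trunc_div D 2; move: (D %/ 2) => z; lia.
have HW : 64 * t.+1 <= C * t.+1 ^ C.
  apply: leq_mul; first by rewrite /C; lia.
  by rewrite -{1}(expn1 t.+1); apply: leq_pexp2l => //; rewrite /C; lia.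
have Hsz : size A1 + size A2 <= 4 * q.+1 by lia.
have Hbk : forall a, a <= t -> a %/ hh < q + q + (q + q).
  move=> a Ha; rewrite ltn_divLR //.
  clear -Ha Ht HD2 Hq1; nia.
set M0 := fun x => nth 0 ([:: t; D; size A1; size A2] ++ A1 ++ A2) x.
have HM0j : forall j, j < size A1 + size A2 -> M0 (4 + j) = nth 0 (A1 ++ A2) j by [].
have HM0ok : mem_ok (C * t.+1 ^ C) M0.
  have Hall : all (fun y => y <= C * t.+1 ^ C) ([:: t; D; size A1; size A2] ++ A1 ++ A2).
    rewrite /= all_cat.
    have h1 : all (fun y => y <= C * t.+1 ^ C) A1 by apply/allP => y /(allP Ha1); lia.
    have h2 : all (fun y => y <= C * t.+1 ^ C) A2 by apply/allP => y /(allP Ha2); lia.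
    rewrite h1 h2 !andbT; apply/andP; split; first lia.
    apply/andP; split; first lia. apply/andP; split; lia.
  move=> x; rewrite /M0.
  case: (ltnP x (size ([:: t; D; size A1; size A2] ++ A1 ++ A2))) => Hx; last by rewrite nth_default.
  by apply: (allP Hall); exact: mem_nth.
have := @run_all (C * t.+1 ^ C) T t D q hh A1 A2 M0 HD HDt Hq Hq1 Hqt Hh Hh0 HW Hsz Ha1 Ha2 Hbk
   erefl erefl erefl erefl HM0j HM0ok.
move=> [c [s' [Hr [Hc [M2 [HC HH [Hb Hst Hout]]]]]]].
exists c, s'; split.
- have -> : init_state t D A1 A2 = St 0 (RF [:: 0;0;0;0;0;0;0;0;0;0;0;0;0;0;0;0;0;0;0;0;0;0;0;0;0;0]) M0.
    by rewrite zeros_RF.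
  exact: reach_exec Hr Hb Hst.
- rewrite (_ : q + q + (q + q) = 4 * q) in Hc; last lia.
  move: Hc Hcq Hdq; rewrite /C; move: (T q) (T (4 * q)) => X Y Hc Hcq Hdq.
  clear -Hc Hcq Hdq Hsz; nia.
- by rewrite Hout; apply: (@approx_outs t D (q + q + (q + q)) hh A1 A2).
Qed.
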